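(* Let $s,t$ be real numbers with $t \geq s > 0$. For each positive integer $n$, let $M_n$ denote the maximum of $|\det A|$ over all matrices $A \in \mathcal{G}_s^{n\times n}([0,t])$. Then $M_1 = t$, $M_2 = t^2$, and $M_n = t\,M_{n-1} + s^2 M_{n-2}$ for all integers $n > 2$.
   Context: For a real number $s$, a positive integer $n$ and a set $P \subseteq \mathbb{R}$, $\mathcal{G}_s^{n\times n}(P)$ denotes the set of all $n\times n$ real upper Hessenberg matrices $A=(a_{ij})$ with $a_{i+1,i} = s$ for $1\le i\le n-1$, $a_{ij}=0$ for $i > j+1$, and $a_{ij}\in P$ for all $i \le j$. *)

(* Defs.v *)
From HB Require Import structures.
From mathcomp Require Import all_boot all_order all_algebra.
From mathcomp Require Import reals.
Set Implicit Arguments. Unset Strict Implicit. Unset Printing Implicit Defensive.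
Import Order.TTheory GRing.Theory Num.Theory.
Local Open Scope ring_scope.

(* A \in G_s^{n x n}(P): upper Hessenberg, subdiagonal entries equal to s,
   entries below the subdiagonal are 0, entries on/above the diagonal lie in P.
   Indices i, j : 'I_n are 0-based; the conditions are shift-invariant. *)
Definition hessG (R : ringType) (s : R) (P : R -> Prop) (n : nat)
    (A : 'M[R]_n) : Prop :=
  forall i j : 'I_n,
    ((i : nat) = j.+1 -> A i j = s) /\
    ((j.+1 < i)%N -> A i j = 0) /\
    ((i <= j)%N -> P (A i j)).

Definition Icc0 (R : realType) (t : R) : R -> Prop := fun x => 0 <= x /\ x <= t.

Definition is_max_absdet (R : realType) (s t : R) (n : nat) (m : R) : Prop :=
  (exists A : 'M[R]_n, hessG s (Icc0 t) A /\ `|\det A| = m) /\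
  (forall A : 'M[R]_n, hessG s (Icc0 t) A -> `|\det A| <= m).

(* Main.v *)
Require Import Defs.
From HB Require Import structures.
From mathcomp Require Import all_boot all_order all_algebra.
From mathcomp Require Import reals.
From mathcomp Require Import lra zify ring.
Import Order.TTheory GRing.Theory Num.Theory.
Local Open Scope ring_scope.
Set Implicit Arguments. Unset Strict Implicit.


Definition D (R : realType) (k : nat) (a : nat -> nat -> R) (v : nat -> R) : R :=
  \det (\matrix_(i < k.+1, j < k.+1) (if (j == k :> nat) then v i else a i j)).

Lemma D_ext (R : realType) k (a b : nat -> nat -> R) (v u : nat -> R) :
  (forall i, (i < k.+1)%N -> (forall j, (j < k)%N -> a i j = b i j) /\ v i = u i) ->
  D k a v = D k b u.
Proof.
move=> H; rewrite /D; congr (\det _); apply/matrixP => i j; rewrite !mxE.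
have [Ha Hv] := H i (ltn_ord i).
case: eqP => Hj //; apply: Ha; have := ltn_ord j; lia.
Qed.

Lemma D0 (R : realType) (a : nat -> nat -> R) v : D 0 a v = v 0%N.
Proof. by rewrite /D det_mx11 mxE. Qed.

Lemma D_rec (R : realType) (s : R) k (a : nat -> nat -> R) v : a k.+1 k = s -> (forall j, (j < k)%N -> a k.+1 j = 0) ->
  D k.+1 a v = v k.+1 * D k a (fun i => a i k) - s * D k a v.
Proof.
move=> Hs H0; rewrite /D (expand_det_row _ ord_max) big_ord_recr /= big_ord_recr /=.
rewrite big1 ?add0r; last first.
  move=> j _; rewrite !mxE /=.
  have -> : (j == k.+1 :> nat) = false by have := ltn_ord j; lia.
  by rewrite H0 ?mul0r.
rewrite !mxE /= eqxx.
have -> : (k == k.+1 :> nat) = false by lia.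
rewrite Hs addrC; congr (_ + _).
  rewrite /cofactor /= addnn -muln2 exprM sqrr_sign mul1r; congr (_ * \det _).
  apply/matrixP => i j; rewrite !mxE /= /bump.
  have -> : (k.+1 <= i)%N = false by have := ltn_ord i; lia.
  have -> : (k.+1 <= j)%N = false by have := ltn_ord j; lia.
  rewrite !add0n.
  have -> : (j == k.+1 :> nat) = false by have := ltn_ord j; lia.
  by case: eqP => // ->.
rewrite /cofactor /= addSn addnn exprS -muln2 exprM sqrr_sign mulr1 mulN1r mulrN.
congr (- (_ * \det _)).
apply/matrixP => i j; rewrite !mxE /= /bump.
have -> : (k.+1 <= i)%N = false by have := ltn_ord i; lia.
rewrite add0n; have [Hj|Hj] := eqVneq (j : nat) k.
  by rewrite Hj leqnn eqxx.
have -> : (k <= j)%N = false by have := ltn_ord j; lia.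
rewrite add0n; have -> : (j == k.+1 :> nat) = false by have := ltn_ord j; lia.
done.
Qed.

Fixpoint g (R : realType) (s t : R) (k : nat) : R :=
  match k with 0 => 0 | 1 => 1 | (k'.+1 as k1).+1 => t * g s t k1 + s^+2 * g s t k' end.

Definition HC (R : realType) (s t : R) k (a : nat -> nat -> R) :=
  forall i j, (j < k)%N -> (i < k.+1)%N ->
   [/\ (i = j.+1 -> a i j = s), ((j.+1 < i)%N -> a i j = 0) & ((i <= j)%N -> 0 <= a i j <= t)].
Definition box (R : realType) (t : R) k (v : nat -> R) :=
  forall i, (i < k.+1)%N -> 0 <= v i <= t.

Lemma g_mon (R : realType) (s t : R) : 0 < s -> s <= t ->
  forall k, 0 <= g s t k /\ s * g s t k <= g s t k.+1.
Proof.
move=> s0 st; elim=> [|k [IH1 IH2]]; first by split=> //=; rewrite mulr0.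
have h0 : 0 <= g s t k.+1 by nra.
have Hg2 : g s t k.+2 = t * g s t k.+1 + s^+2 * g s t k by [].
split=> //; rewrite Hg2; nra.
Qed.

Lemma inv (R : realType) (s t : R) : 0 < s -> s <= t -> forall k a, HC s t k a ->
  exists p q : R, (0 <= p /\ 0 <= q) /\ [/\ 
   (forall v, box t k v -> - (t * q) <= D k a v <= t * p),
   p <= g s t k.+1, q <= g s t k.+1 & (p <= s * g s t k \/ q <= s * g s t k)].
Proof.
move=> s0 st; elim=> [|k IH] a Ha.
  exists 1, 0; split; first by split.
  split; [| by [] | by [] | by right; rewrite /= mulr0].
  by move=> v /(_ 0%N isT); rewrite D0 mulr0 mulr1 oppr0.
have Hk : HC s t k a.
  by move=> i j Hj Hi; apply: Ha; apply: leqW.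
have [p [q [[p0 q0] [Hb pg qg Hor]]]] := IH a Hk.
have [g0 gm] := g_mon s0 st k.
have [g10 g1m] := g_mon s0 st k.+1.
have Hs : a k.+1 k = s by have [] := Ha k.+1 k (ltnSn _) (ltnSn _); auto.
have H0 : forall j, (j < k)%N -> a k.+1 j = 0.
  move=> j Hj; have Hj1 : (j < k.+1)%N by apply: leqW.
  by have [_ H _] := Ha k.+1 j Hj1 (ltnSn _); apply: H; rewrite ltnS.
set x := D k a (fun i => a i k).
have Hx : - (t * q) <= x <= t * p.
  apply: Hb => i Hi; have [_ _ ] := Ha i k (ltnSn _) (leqW Hi); by apply; rewrite -ltnS.
have Hg2 : g s t k.+2 = t * g s t k.+1 + s^+2 * g s t k by [].
have Hbk : forall v, box t k.+1 v -> box t k v by move=> v Hv i0 Hi0; apply: Hv; apply: leqW.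
have F1 : 0 <= s * ((g s t k.+1) - q) by apply: mulr_ge0; lra.
have F2 : 0 <= s * ((g s t k.+1) - p) by apply: mulr_ge0; lra.
have F3 : 0 <= t * ((g s t k.+1) - p) by apply: mulr_ge0; lra.
have F4 : 0 <= t * ((g s t k.+1) - q) by apply: mulr_ge0; lra.
have F5 : 0 <= (t - s) * ((g s t k.+1) - s * (g s t k)) by apply: mulr_ge0; lra.
have F6 : 0 <= (t - s) * (g s t k.+1) by apply: mulr_ge0; lra.
have F7 : 0 <= s^+2 * (g s t k) by apply: mulr_ge0; rewrite ?sqr_ge0; lra.
have Hor' : (0 <= t * (s * (g s t k) - p) /\ 0 <= s * (s * (g s t k) - p)) \/
            (0 <= t * (s * (g s t k) - q) /\ 0 <= s * (s * (g s t k) - q)).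
  case: Hor => H; [left|right]; split; apply: mulr_ge0; lra.
have sq : 0 <= s * q by apply: mulr_ge0; lra.
have sp : 0 <= s * p by apply: mulr_ge0; lra.
have [xp|xn] := lerP 0 x.
  exists (s * q + x), (s * p); split; first by split; lra.
  split.
  - move=> v Hv; rewrite (D_rec _ Hs H0) -/x.
    have [v0 vt] := andP (Hv k.+1 (ltnSn _)).
    have h1 : 0 <= v k.+1 * x by apply: mulr_ge0.
    have h2 : v k.+1 * x <= t * x by apply: ler_wpM2r.
    have [h3 h4] := andP (Hb v (Hbk v Hv)).
    have h5 : s * D k a v <= s * (t * p) by apply: ler_wpM2l; lra.
    have h6 : s * (- (t * q)) <= s * D k a v by apply: ler_wpM2l; lra.
    apply/andP; split; lra.
  - rewrite Hg2; case: Hor' => -[]; lra.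
  - rewrite Hg2; lra.
  - right; lra.
exists (s * q), (s * p - x); split; first by split; lra.
split.
- move=> v Hv; rewrite (D_rec _ Hs H0) -/x.
  have [v0 vt] := andP (Hv k.+1 (ltnSn _)).
  have h1 : v k.+1 * x <= 0 by rewrite mulr_ge0_le0 //; lra.
  have h2 : t * x <= v k.+1 * x by apply: ler_wnM2r => //; lra.
  have [h3 h4] := andP (Hb v (Hbk v Hv)).
  have h5 : s * D k a v <= s * (t * p) by apply: ler_wpM2l; lra.
  have h6 : s * (- (t * q)) <= s * D k a v by apply: ler_wpM2l; lra.
  apply/andP; split; lra.
- rewrite Hg2; lra.
- rewrite Hg2; case: Hor' => -[]; lra.
- left; lra.
Qed.

Lemma lt_ne (i k : nat) : (i < k.+2)%N -> i <> k.+1 -> (i < k.+1)%N.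
Proof. rewrite ltnS leq_eqVlt => /orP [/eqP -> //|//]. Qed.

Lemma exist_opt (R : realType) (s t : R) : 0 < s -> s <= t -> forall k,
  exists a, HC s t k a /\ (exists w, box t k w /\ D k a w = t * g s t k.+1) /\
    (exists v, box t k v /\ D k a v = - (t * s * g s t k)).
Proof.
move=> s0 st; have t0 : 0 <= t by lra.
elim=> [|k [a [Ha [[w [Hw Dw]] [v [Hv Dv]]]]]].
  exists (fun _ _ => 0); split; first by move=> i j.
  split.
    exists (fun _ => t); split; first by move=> i _; apply/andP; split; lra.
    by rewrite D0 /= mulr1.
  exists (fun _ => 0); split; first by move=> i _; apply/andP; split; lra.
  by rewrite D0 /= mulr0 oppr0.
pose a' i j := if i == k.+1 then (if j == k then s else 0) else if j == k then w i else a i j.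
have Ha' : HC s t k.+1 a'.
  move=> i j Hj Hi; rewrite /a'.
  have [->|Hik] := eqVneq i k.+1.
    idtac; have [->|Hjk] := eqVneq j k.
      split=> //; [by rewrite ltnn | by rewrite ltnn].
    split=> //.
    - by move=> [] E; rewrite E eqxx in Hjk.
    - by move=> H; exfalso; have := leq_ltn_trans H Hj; rewrite ltnn.
  have Hi' : (i < k.+1)%N by rewrite ltnS leq_eqVlt (negbTE Hik) /= -ltnS in Hi.
  have [->|Hjk] := eqVneq j k.
    split.
    - by move=> E; move: Hi'; rewrite E ltnn.
    - by move=> H; exfalso; move: (ltn_trans H Hi'); rewrite ltnn.
    - by move=> _; apply: Hw.
  apply: Ha => //; by rewrite ltnS leq_eqVlt (negbTE Hjk) /= -ltnS in Hj.
have Hs : a' k.+1 k = s by rewrite /a' !eqxx.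
have H0 : forall j, (j < k)%N -> a' k.+1 j = 0.
  by move=> j Hj; rewrite /a' eqxx; case: eqP => // E; move: Hj; rewrite E ltnn.
have Hg2 : g s t k.+2 = t * g s t k.+1 + s^+2 * g s t k by [].
have Ext : forall u u', (forall i, (i < k.+1)%N -> u i = u' i) -> D k a' u = D k a u'.
  move=> u u' Hu; apply: D_ext => i Hi; split; last exact: Hu.
  move=> j Hj; rewrite /a'; have -> : (i == k.+1) = false by apply/negbTE; rewrite neq_ltn Hi.
  by have -> : (j == k) = false by apply/negbTE; rewrite neq_ltn Hj.
exists a'; split=> //; split.
  exists (fun i => if i == k.+1 then t else v i); split.
    move=> i Hi; case: eqP => E; [apply/andP; split; lra|].
    by apply: Hv; apply: lt_ne.
  rewrite (D_rec _ Hs H0) eqxx.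
  rewrite (Ext _ w); last by move=> i Hi; rewrite /a'; case: eqP => [E|_]; [move: Hi; rewrite E ltnn | rewrite eqxx].
  rewrite (Ext _ v); last by move=> i Hi; case: ifP => [/eqP E|_] //; move: Hi; rewrite E ltnn.
  rewrite Dw Dv Hg2; ring.
exists (fun i => if i == k.+1 then 0 else w i); split.
  move=> i Hi; case: eqP => E; [apply/andP; split; lra|].
  by apply: Hw; apply: lt_ne.
rewrite (D_rec _ Hs H0) eqxx mul0r.
rewrite (Ext _ w); last by move=> i Hi; case: ifP => [/eqP E|_] //; move: Hi; rewrite E ltnn.
rewrite Dw; ring.
Qed.

Unset Implicit Arguments.
Unset Strict Implicit.
Theorem theorem2p6 (R : realType) (s t : R) :
  0 < s -> s <= t ->
  exists M : nat -> R,
    (forall n : nat, (0 < n)%N -> is_max_absdet s t n (M n)) /\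
    M 1%N = t /\ M 2%N = t ^+ 2 /\
    (forall n : nat, (2 < n)%N -> M n = t * M n.-1 + s ^+ 2 * M n.-2).
Proof.
move=> s0 st; have t0 : 0 <= t by lra.
exists (fun n => t * g s t n); split; last first.
  split; first by rewrite /= mulr1.
  split; first by rewrite /= mulr1 mulr0 addr0 expr2.
  case=> [|[|[|m]]] // _.
  have -> : g s t m.+3 = t * g s t m.+2 + s^+2 * g s t m.+1 by [].
  rewrite [m.+3.-1]/= [m.+3.-2]/=; ring.
case=> [//|k] _; split.
  have [a [Ha [[w [Hw Dw]] _]]] := exist_opt s0 st k.
  exists (\matrix_(i < k.+1, j < k.+1) (if (j == k :> nat) then w i else a i j)).
  split; last first.
    have [g0 _] := g_mon s0 st k.+1.
    by rewrite -/(D k a w) Dw ger0_norm //; apply: mulr_ge0.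
  move=> i j; rewrite !mxE.
  have Hi := ltn_ord i; have Hj := ltn_ord j.
  case: ifP => [/eqP E|/negbT E].
    split; [|split].
    - by move=> F; move: Hi; rewrite F E ltnn.
    - by move=> F; exfalso; have := ltn_trans F Hi; rewrite E ltnn.
    - by move=> _; have := Hw i Hi; case/andP=> ? ?; split.
  have Hj' : (j < k)%N by rewrite ltn_neqAle E -ltnS.
  have [H1 H2 H3] := Ha i j Hj' Hi.
  split; [exact: H1|split; [exact: H2|]].
  by move=> F; have := H3 F; case/andP=> ? ?; split.
move=> A HA.
pose a i j := A (inord i) (inord j).
have -> : \det A = D k a (fun i => a i k).
  rewrite /D; congr (\det _); apply/matrixP => i j; rewrite !mxE /a.
  case: eqP => [E|_]; last by rewrite !inord_val.
  rewrite inord_val; congr (A _ _); by apply: val_inj; rewrite /= E inordK.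
have Hc : HC s t k a.
  move=> i j Hj Hi.
  have Hj1 : (j < k.+1)%N by apply: leqW.
  have [H1 [H2 H3]] := HA (inord i) (inord j); rewrite /a.
  rewrite !inordK in H1 H2 H3 => //.
  split; [exact: H1|exact: H2|].
  by move=> F; have [] := H3 F => ? ?; apply/andP; split.
have [p [q [[p0 q0] [Hb pg qg _]]]] := inv s0 st Hc.
have Hbx : box t k (fun i => a i k).
  move=> i Hi; have [_ [_ H3]] := HA (inord i) (inord k).
  rewrite /a; rewrite !inordK in H3 => //.
  by have [] := H3 (Hi : (i <= k)%N) => ? ?; apply/andP; split.
have [h1 h2] := andP (Hb _ Hbx).
have h3 : t * p <= t * g s t k.+1 by apply: ler_wpM2l.
have h4 : t * q <= t * g s t k.+1 by apply: ler_wpM2l.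
rewrite ler_norml; apply/andP; split; lra.
Qed.
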